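(* Let $a>0$ be a constant and let $x\in\{0,1\}^n$ have exactly $(\frac12+a)n$ bits equal to $1$. Let $x^k$ denote the $k$-th bitstring sampled by the hypermutation operator on input $x$, $k=1,\dots,n$. Then for any $c=\omega(\sqrt{\log n/n})$ with $c\in(0,a)$, with probability $1-e^{-\Omega(nc^2)}$ there exists $k\in\{n\frac{a-c}{2a-c},\dots,n\frac{a}{2a-c}\}$ such that $x^k$ has exactly $n/2$ bits equal to $1$.
   Context: The hypermutation operator on input $x\in\{0,1\}^n$ (disregarding its stopping rule) flips the $n$ bit positions one at a time in a uniformly random order, i.e. according to a uniformly random permutation of $\{1,\dots,n\}$; the $k$-th sampled bitstring $x^k$ is the string obtained from $x$ after the first $k$ of these flips. Asymptotics are as $n\to\infty$. *)

(* Defs.v *)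
From HB Require Import structures.
From mathcomp Require Import all_boot all_order all_algebra all_fingroup.
From mathcomp Require Import all_classical all_reals all_analysis.
Set Implicit Arguments. Unset Strict Implicit. Unset Printing Implicit Defensive.
Import Order.TTheory GRing.Theory Num.Theory.
Local Open Scope ring_scope.

(* The hypermutation operator flips positions s 0, s 1, ..., s (n-1) in this
   order, for a uniformly random permutation s of 'I_n.  After k flips the set
   of flipped positions is {s j | j < k}. *)
Definition flipped (n : nat) (s : {perm 'I_n}) (k : nat) : {set 'I_n} :=
  [set s j | j : 'I_n & (j < k)%N].

Definition hyp_sample (n : nat) (x : {ffun 'I_n -> bool}) (s : {perm 'I_n})
  (k : nat) : {ffun 'I_n -> bool} :=
  [ffun i => x i (+) (i \in flipped s k)].

Definition ones (n : nat) (y : {ffun 'I_n -> bool}) : nat := #|[set i | y i]|.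

Definition prob_perm (R : realType) (n : nat) (E : pred {perm 'I_n}) : R :=
  (#|[set s | E s]|)%:R / (#|[set: {perm 'I_n}]|)%:R.

(* Main.v *)
Require Import Defs.
From HB Require Import structures.
From mathcomp Require Import all_boot all_order all_algebra all_fingroup.
From mathcomp Require Import all_classical all_reals all_analysis.
From mathcomp Require Import zify ring lra.
Import Order.TTheory GRing.Theory Num.Theory.
Local Open Scope ring_scope.
Set Implicit Arguments. Unset Strict Implicit. Unset Printing Implicit Defensive.

Definition Fk {n} (y : 'I_n -> bool) (s : {perm 'I_n}) (k : nat) : nat :=
  (\sum_(j < n | (j < k)%N) y (s j))%N.

Lemma card_lt n k : (k <= n)%N -> (\sum_(j < n | (j < k)%N) 1 = k)%N.
Proof.
move=> kn; rewrite -(big_ord_widen n (fun _ => 1%N) kn).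
by rewrite sum1_card card_ord.
Qed.

Lemma card_ge n k : (k <= n)%N -> (\sum_(j < n | ~~ (j < k)%N) 1 = n - k)%N.
Proof.
move=> kn.
have := sum1_card (pred_of_simpl (@predT (ordinal n))); rewrite card_ord (bigID (fun j : 'I_n => (j < k)%N)) /=.
rewrite card_lt // => h; lia.
Qed.

Lemma sum_constR (R : realType) n (P : pred 'I_n) (C : R) :
  \sum_(j < n | P j) C = (\sum_(j < n | P j) 1)%N%:R * C.
Proof.
by rewrite natr_sum mulr_suml; apply: eq_bigr => j _; rewrite mulr1n mul1r.
Qed.

Lemma sum_constR0 (R : realType) n (C : R) : \sum_(j < n) C = n%:R * C.
Proof. by rewrite sumr_const card_ord mulr_natl. Qed.

Lemma swap_sum (R : realType) n (G : {perm 'I_n} -> R) (b : 'I_n -> R) (i j : 'I_n) :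
  (forall s, G (tperm i j * s)%g = G s) ->
  \sum_s G s * b (s i) = \sum_s G s * b (s j).
Proof.
move=> HG; rewrite (reindex_inj (mulgI (tperm i j))) /=.
by apply: eq_bigr => s _; rewrite HG permM tpermL.
Qed.

Lemma Fk_tperm n (y : 'I_n -> bool) (s : {perm 'I_n}) k (i j : 'I_n) :
  (k <= i)%N -> (k <= j)%N -> Fk y (tperm i j * s)%g k = Fk y s k.
Proof.
move=> ki kj; apply: eq_bigr => l lk; rewrite permM tpermD //.
  by apply/eqP=> e; move: lk; rewrite -e ltnNge ki.
by apply/eqP=> e; move: lk; rewrite -e ltnNge kj.
Qed.

Lemma sum_ys n (y : 'I_n -> bool) (s : {perm 'I_n}) :
  (\sum_j y (s j) = \sum_j y j)%N.
Proof. by rewrite [RHS](reindex_inj (@perm_inj _ s)). Qed.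

Lemma Fk_split n (y : 'I_n -> bool) (s : {perm 'I_n}) k :
  (\sum_j y j = Fk y s k + \sum_(j < n | ~~ (j < k)%N) y (s j))%N.
Proof. by rewrite -(sum_ys y s) (bigID (fun j : 'I_n => (j < k)%N)). Qed.

Lemma key_step (R : realType) n (y : 'I_n -> bool) (h : nat -> R) (k : 'I_n) :
  (n - k)%:R * \sum_s h (Fk y s k) * (y (s k))%:R =
  \sum_s h (Fk y s k) * ((\sum_j y j)%N%:R - (Fk y s k)%:R).
Proof.
have E s : ((\sum_j y j)%N%:R - (Fk y s k)%:R : R) =
           \sum_(j < n | ~~ (j < k)%N) (y (s j))%:R.
  by rewrite (Fk_split y s k) natrD addrC addKr natr_sum.
under [RHS]eq_bigr do rewrite E mulr_sumr.
rewrite exchange_big /=.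
rewrite [RHS](eq_bigr (fun _ => \sum_s h (Fk y s k) * (y (s k))%:R)); last first.
  move=> j jk; apply: (@swap_sum R n (fun s => h (Fk y s k)) (fun i => (y i)%:R) j k).
  by move=> s; rewrite Fk_tperm // leqNgt.
by rewrite sum_constR card_ge // ltnW.
Qed.

Lemma sum_ys_k (R : realType) n (y : 'I_n -> bool) (k : 'I_n) :
  n%:R * \sum_(s : {perm 'I_n}) ((y (s k))%:R : R) =
  #|{perm 'I_n}|%:R * (\sum_j y j)%N%:R.
Proof.
have E j : \sum_(s : {perm 'I_n}) ((y (s j))%:R : R) = \sum_(s : {perm 'I_n}) (y (s k))%:R.
  rewrite (reindex_inj (mulgI (tperm j k))) /=.
  by apply: eq_bigr => s _; rewrite permM tpermL.
have -> : (n%:R * \sum_(s : {perm 'I_n}) ((y (s k))%:R : R)) =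
          \sum_(j < n) \sum_(s : {perm 'I_n}) ((y (s j))%:R : R).
  by rewrite (eq_bigr _ (fun j _ => E j)) sum_constR0.
rewrite exchange_big /= (eq_bigr (fun _ => ((\sum_j y j)%N%:R : R))).
  by rewrite sumr_const mulr_natl.
by move=> s _; rewrite -natr_sum sum_ys.
Qed.

Lemma sum_Fk (R : realType) n (y : 'I_n -> bool) k : (k <= n)%N ->
  n%:R * \sum_(s : {perm 'I_n}) ((Fk y s k)%:R : R) =
  k%:R * (#|{perm 'I_n}|%:R * (\sum_j y j)%N%:R).
Proof.
move=> kn.
rewrite /Fk (eq_bigr (fun s : {perm 'I_n} => \sum_(j < n | (j < k)%N) ((y (s j))%:R : R))); last first.
  by move=> s _; rewrite natr_sum.
rewrite exchange_big /= mulr_sumr.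
rewrite (eq_bigr (fun _ => #|{perm 'I_n}|%:R * (\sum_j y j)%N%:R)).
  by rewrite sum_constR card_lt.
by move=> j _; rewrite sum_ys_k.
Qed.

Lemma Fk_S n (y : 'I_n -> bool) s (k : 'I_n) : Fk y s k.+1 = (Fk y s k + y (s k))%N.
Proof.
rewrite /Fk (bigD1 k) //= addnC; congr (_ + _)%N; apply: eq_bigl => j.
by rewrite ltnS ltn_neqAle andbC.
Qed.

Lemma Fk0 n (y : 'I_n -> bool) s : Fk y s 0 = 0%N.
Proof. by rewrite /Fk big_pred0. Qed.

Lemma cheb (R : realType) (T : finType) (u : T -> nat) (f g : nat -> R) :
  {homo f : a b / (a <= b)%N >-> a <= b} ->
  {homo g : a b / (a <= b)%N >-> b <= a} ->
  #|T|%:R * \sum_(t : T) f (u t) * g (u t) <= (\sum_(t : T) f (u t)) * (\sum_(t : T) g (u t)).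
Proof.
move=> hf hg.
have H : 0 <= \sum_(t : T) \sum_(t' : T) (f (u t) - f (u t')) * (g (u t') - g (u t)).
  apply: sumr_ge0 => t _; apply: sumr_ge0 => t' _.
  case: (leqP (u t) (u t')) => h.
    have -> : (f (u t) - f (u t')) * (g (u t') - g (u t)) =
              (f (u t') - f (u t)) * (g (u t) - g (u t')) by ring.
    by apply: mulr_ge0; rewrite subr_ge0; [apply: hf | apply: hg].
  by apply: mulr_ge0; rewrite subr_ge0; [apply: hf | apply: hg]; apply: ltnW.
have E : \sum_(t : T) \sum_(t' : T) (f (u t) - f (u t')) * (g (u t') - g (u t)) =
  ((\sum_(t : T) \sum_(t' : T) f (u t) * g (u t')) + (\sum_(t : T) \sum_(t' : T) f (u t') * g (u t)))
  - ((\sum_(t : T) \sum_(t' : T) f (u t) * g (u t)) + (\sum_(t : T) \sum_(t' : T) f (u t') * g (u t'))).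
  rewrite -!big_split -sumrB /=; apply: eq_bigr => t _.
  rewrite -!big_split -sumrB /=; apply: eq_bigr => t' _; ring.
have E1 : \sum_(t : T) \sum_(t' : T) f (u t) * g (u t') = (\sum_(t : T) f (u t)) * (\sum_(t : T) g (u t)).
  by rewrite mulr_suml; apply: eq_bigr => t _; rewrite mulr_sumr.
have E2 : \sum_(t : T) \sum_(t' : T) f (u t') * g (u t) = (\sum_(t : T) f (u t)) * (\sum_(t : T) g (u t)).
  by rewrite exchange_big.
have E3 : \sum_t \sum_(t' : T) f (u t) * g (u t) = #|T|%:R * \sum_(t : T) f (u t) * g (u t).
  by rewrite mulr_sumr; apply: eq_bigr => t _; rewrite sumr_const mulr_natl.
have E4 : \sum_(t : T) \sum_t' f (u t') * g (u t') = #|T|%:R * \sum_(t : T) f (u t) * g (u t).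
  by rewrite sumr_const mulr_natl.
move: H; rewrite E E1 E2 E3 E4; lra.
Qed.

Lemma eqle (R : numDomainType) (x y : R) : x = y -> x <= y.
Proof. by move->. Qed.

Lemma Phi_bound (R : realType) n (y : 'I_n -> bool) (z : R) k :
  0 <= z -> (0 < n)%N -> (k <= n)%N ->
  \sum_(s : {perm 'I_n}) (1 + z) ^+ Fk y s k <=
  #|{perm 'I_n}|%:R * (1 + z * (\sum_j y j)%N%:R / n%:R) ^+ k.
Proof.
move=> z0 n0; elim: k => [_|k IH kn].
  rewrite (eq_bigr (fun _ => 1)); last by move=> s _; rewrite Fk0 expr0.
  by rewrite sumr_const expr0 mulr1.
have kn' : (k < n)%N := kn.
set ko := Ordinal kn'.
set N := (#|{perm 'I_n}|%:R : R).
set m := ((\sum_j y j)%N%:R : R).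
set Phi := \sum_(s : {perm 'I_n}) (1 + z) ^+ Fk y s k.
set S := \sum_(s : {perm 'I_n}) (1 + z) ^+ Fk y s k * (y (s ko))%:R.
have E1 : \sum_(s : {perm 'I_n}) (1 + z) ^+ Fk y s k.+1 = Phi + z * S.
  rewrite /Phi /S mulr_sumr -big_split /=; apply: eq_bigr => s _.
  rewrite (Fk_S y s ko) /= exprD; case: (y (s ko)) => /=; rewrite ?expr1 ?expr0; ring.
have E2 := key_step y (fun i : nat => (1 + z) ^+ i) ko.
rewrite /= -/S in E2.
have hf : {homo (fun i => (1 + z) ^+ i) : a b / (a <= b)%N >-> a <= b}.
  by move=> a b ab; apply: ler_weXn2l => //; rewrite lerDl.
have hg : {homo (fun i : nat => m - i%:R) : a b / (a <= b)%N >-> b <= a}.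
  by move=> a b ab; rewrite lerD2l lerN2 ler_nat.
have C := cheb (fun s => Fk y s k) hf hg.
rewrite -/N -/Phi /= -E2 in C.
have SF := sum_Fk R y (ltnW kn).
have G : \sum_(s : {perm 'I_n}) (m - (Fk y s k)%:R) = N * m - \sum_(s : {perm 'I_n}) ((Fk y s k)%:R : R).
  by rewrite sumrB sumr_const mulr_natl.
rewrite G in C.
have N0 : 0 < N by rewrite ltr0n card_Sn fact_gt0.
have nk0 : (0 : R) < (n - k)%:R by rewrite ltr0n subn_gt0.
have n0' : (0 : R) < n%:R by rewrite ltr0n.
have hS : S * n%:R <= Phi * m.
  rewrite -(ler_pM2l (mulr_gt0 N0 nk0)).
  have : n%:R * (N * ((n - k)%:R * S)) <= n%:R * (Phi * (N * m - \sum_(s : {perm 'I_n}) ((Fk y s k)%:R : R))).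
    by rewrite ler_wpM2l // ler0n.
  have -> : n%:R * (Phi * (N * m - \sum_(s : {perm 'I_n}) ((Fk y s k)%:R : R))) =
    Phi * (n%:R * N * m - n%:R * \sum_(s : {perm 'I_n}) ((Fk y s k)%:R : R)) by ring.
  rewrite SF natrB ?(ltnW kn) // => h.
  apply: le_trans (_ : _ <= _) _.
    2: { apply: le_trans h _; apply: eqle; rewrite -/N; ring. }
  apply: eqle; ring.
have Phi0 : 0 <= Phi by apply: sumr_ge0 => s _; apply: exprn_ge0; rewrite addr_ge0.
rewrite E1 exprSr.
have hzS : z * S <= z * (Phi * m / n%:R).
  by apply: ler_wpM2l => //; rewrite ler_pdivlMr.
apply: le_trans (_ : Phi + z * S <= Phi * (1 + z * m / n%:R)) _.
  by apply: le_trans (lerD (lexx Phi) hzS) _; apply: eqle; field; rewrite gt_eqF.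
rewrite mulrA ler_wpM2r //.
  by rewrite addr_ge0 // divr_ge0 ?mulr_ge0 ?ler0n.
by apply: IH; apply: ltnW.
Qed.

Lemma powle (R : realType) (x y : R) k : 0 <= x -> x <= y -> x ^+ k <= y ^+ k.
Proof. by move=> x0 xy; apply: lerXn2r; rewrite ?nnegrE // (le_trans x0 xy). Qed.

Lemma expA (R : realType) (z : R) : 0 <= z -> expR (z - z ^+ 2) <= 1 + z.
Proof.
move=> z0; have -> : z - z ^+ 2 = - (z ^+ 2 - z) by ring.
rewrite expRN; set w := z ^+ 2 - z.
have ew := expR_ge1Dx w.
have w1 : 0 < 1 + w by rewrite /w; nra.
rewrite -(ler_pM2l (expR_gt0 w)) mulfV ?gt_eqF ?expR_gt0 //.
apply: le_trans (_ : 1 <= (1 + w) * (1 + z)) _.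
  by rewrite /w; nra.
by apply: ler_wpM2r => //; rewrite addr_ge0.
Qed.

Lemma tail (R : realType) n (y : 'I_n -> bool) k (th t : R) :
  (0 < n)%N -> (k <= n)%N -> 0 < t ->
  (\sum_j y j)%N%:R / n%:R * k%:R + t <= th -> th <= n%:R ->
  #|[set s : {perm 'I_n} | th <= (Fk y s k)%:R]|%:R <=
    #|{perm 'I_n}|%:R * expR (- (t ^+ 2 / (4 * n%:R))).
Proof.
move=> n0 kn t0 hth thn.
have n0' : (0 : R) < n%:R by rewrite ltr0n.
set m := ((\sum_j y j)%N%:R : R).
have m0 : 0 <= m by rewrite ler0n.
have q0 : 0 <= m / n%:R * k%:R by rewrite mulr_ge0 ?divr_ge0 ?ler0n.
set z := t / (2 * n%:R).
have z0 : 0 <= z by apply: divr_ge0; [apply: ltW | apply: mulr_ge0; rewrite ?ler0n].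
have z1 : z <= 1.
  rewrite /z ler_pdivrMr ?mulr_gt0 //; lra.
have zz : 0 <= z - z ^+ 2 by nra.
set A := [set s : {perm 'I_n} | th <= (Fk y s k)%:R].
set N := (#|{perm 'I_n}|%:R : R).
have h1 : #|A|%:R * expR (th * (z - z ^+ 2)) <= \sum_(s : {perm 'I_n}) (1 + z) ^+ Fk y s k.
  rewrite -sum1_card natr_sum mulr_suml.
  rewrite [X in _ <= X](bigID (fun s => s \in A)) /=.
  rewrite -[X in X <= _]addr0; apply: lerD; last first.
    by apply: sumr_ge0 => s _; apply: exprn_ge0; rewrite addr_ge0.
  apply: ler_sum => s; rewrite inE mulr1n mul1r => hs.
  apply: le_trans (_ : expR ((Fk y s k)%:R * (z - z ^+ 2)) <= _).
    by rewrite ler_expR ler_wpM2r.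
  by rewrite expRM_natl; apply: powle; [apply: expR_ge0 | apply: expA].
have h2 := Phi_bound y z0 n0 kn.
rewrite -/m -/N in h2.
have h3 : (1 + z * m / n%:R) ^+ k <= expR (k%:R * (z * m / n%:R)).
  by rewrite expRM_natl; apply: powle; [apply: addr_ge0 => //; apply: divr_ge0; [apply: mulr_ge0 | apply: ltW] | apply: expR_ge1Dx].
have N0 : 0 <= N by rewrite ler0n.
have h4 : #|A|%:R * expR (th * (z - z ^+ 2)) <= N * expR (k%:R * (z * m / n%:R)).
  by apply: le_trans h1 _; apply: le_trans h2 _; apply: ler_wpM2l.
have h5 : #|A|%:R <= N * expR (k%:R * (z * m / n%:R) - th * (z - z ^+ 2)).
  rewrite expRD expRN mulrA ler_pdivlMr ?expR_gt0 //.
apply: le_trans h5 _; apply: ler_wpM2l => //; rewrite ler_expR.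
have e1 : k%:R * (z * m / n%:R) = (m / n%:R * k%:R) * z by ring.
rewrite e1.
have e2 : - (t ^+ 2 / (4 * n%:R)) = - t * z + n%:R * z ^+ 2.
  by rewrite /z; field; rewrite gt_eqF.
rewrite e2.
set q := m / n%:R * k%:R in hth q0 e1 *.
have : (q + t) * z <= th * z by rewrite ler_wpM2r.
have : th * z ^+ 2 <= n%:R * z ^+ 2 by rewrite ler_wpM2r // sqr_ge0.
lra.
Qed.

Lemma ones_sum n (y : {ffun 'I_n -> bool}) : ones y = (\sum_i y i)%N.
Proof.
rewrite /ones -sum1dep_card big_mkcond /=; apply: eq_bigr => i _.
by case: (y i).
Qed.

Lemma ones_le n (y : {ffun 'I_n -> bool}) : (ones y <= n)%N.
Proof. by rewrite /ones (leq_trans (max_card _)) // card_ord. Qed.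

Lemma ones_hyp n (x : {ffun 'I_n -> bool}) s k : (k <= n)%N ->
  (ones (hyp_sample x s k) + 2 * Fk x s k = k + ones x)%N.
Proof.
move=> kn; rewrite !ones_sum.
rewrite (reindex_inj (@perm_inj _ s)) /=.
rewrite -(sum_ys x s).
apply: (@eq_trans _ _ (\sum_(j < n | (j < k)%N) 1 + \sum_j x (s j))%N); last by rewrite card_lt.
rewrite /Fk big_distrr /= !(big_mkcond (fun j : 'I_n => (j < k)%N)) /=.
rewrite -!big_split /=; apply: eq_bigr => j _.
rewrite ffunE /flipped mem_imset ?inE; last exact: perm_inj.
by case: (x (s j)); case: (j < k)%N.
Qed.

Lemma Fk_compl n (y : 'I_n -> bool) s k : (k <= n)%N ->
  (Fk y s k + Fk (fun i => ~~ y i) s k = k)%N.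
Proof.
move=> kn; apply: (@eq_trans _ _ (\sum_(j < n | (j < k)%N) 1)%N); last by rewrite card_lt.
rewrite /Fk -big_split /=; apply: eq_bigr => j _.
by case: (y (s j)).
Qed.

Lemma sum_compl n (y : 'I_n -> bool) :
  (\sum_j (~~ y j) = n - \sum_j y j)%N.
Proof.
have : (\sum_j y j + \sum_j (~~ y j) = n)%N.
  apply: (@eq_trans _ _ (\sum_(j < n) 1)%N); last by rewrite sum1_card card_ord.
  rewrite -big_split /=; apply: eq_bigr => j _.
  by case: (y j).
lia.
Qed.

Lemma ivt (f : nat -> nat) v a d :
  (forall i, (a <= i < a + d)%N -> (f i <= f i.+1 + 1)%N) ->
  (v <= f a)%N -> (f (a + d) <= v)%N ->
  exists i, [/\ (a <= i)%N, (i <= a + d)%N & f i = v].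
Proof.
elim: d a => [|d IH] a hs h1 h2.
  by move: h2; rewrite addn0 => h2; exists a; split => //; lia.
have [e|ne] := eqVneq (f a) v; first by exists a; split => //; rewrite leq_addr.
have h1' : (v <= f a.+1)%N.
  have := hs a; rewrite leqnn addnS ltnS leq_addr => /(_ isT).
  move: ne h1; lia.
have hs' : forall i, (a.+1 <= i < a.+1 + d)%N -> (f i <= f i.+1 + 1)%N.
  by move=> i /andP [h1i h2i]; apply: hs; rewrite addnS -addSn h2i andbT ltnW.
have h2' : (f (a.+1 + d) <= v)%N by rewrite addSn -addnS.
have [i [ai id fi]] := IH a.+1 hs' h1' h2'.
by exists i; split => //; [apply: ltnW | rewrite addnS -addSn].
Qed.
Lemma count_final (T : finType) (BB A1 A2 : {set T}) :
  (forall s, s \notin A1 -> s \notin A2 -> s \in BB) ->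
  (#|T| <= #|BB| + (#|A1| + #|A2|))%N.
Proof.
move=> Hev.
have sub : (~: BB) \subset (A1 :|: A2).
  apply/fintype.subsetP => s; rewrite finset.in_setC finset.in_setU; apply: contraR.
  by rewrite negb_or => /andP [h1 h2]; apply: Hev.
have c1 := subset_leq_card sub.
have c2 : (#|A1 :|: A2| <= #|A1| + #|A2|)%N by rewrite cardsU leq_subr.
have c3 := cardsC BB.
lia.
Qed.


Unset Implicit Arguments.

Theorem theorem3 (R : realType) (a : R) (c : nat -> R) :
  0 < a ->
  (forall n : nat, 0 < c n < a) ->
  (* c = omega(sqrt(log n / n)) *)
  (forall M : R, 0 < M -> exists N : nat, forall n : nat, (N <= n)%N ->
      M * Num.sqrt (ln n%:R / n%:R) < c n) ->
  (* probability 1 - e^{-Omega(n c^2)} *)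
  exists C : R, 0 < C /\ exists N : nat,
    forall (n : nat) (x : {ffun 'I_n -> bool}),
      (N <= n)%N -> ~~ odd n ->
      (ones x)%:R = (1 / 2 + a) * n%:R ->
      1 - expR (- (C * n%:R * c n ^+ 2)) <=
      prob_perm R (fun s : {perm 'I_n} =>
        [exists k : 'I_n.+1,
          [&& (1 <= k)%N,
              n%:R * (a - c n) / (2 * a - c n) <= (k : nat)%:R,
              (k : nat)%:R <= n%:R * a / (2 * a - c n) &
              ones (hyp_sample x s k) == n./2]]).
Proof.
move=> a0 hc hom.
pose K : R := 512 + 8 * a ^+ 2.
have ln2 : 0 < ln (2 : R) by apply: ln_gt0; lra.
pose M : R := 1 + K / ln 2.
have K0 : 0 < K by rewrite /K; nra.
have KM : K <= M * ln 2.
  by rewrite /M mulrDl mul1r divfK ?gt_eqF //; lra.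
have M1 : 1 <= M by rewrite /M lerDl divr_ge0 // ltW.
have M0 : 0 < M by lra.
have [N0 hN0] := hom M M0.
exists (1 / 512); split; first by rewrite divr_gt0 // ltr0n.
exists (maxn N0 2) => n x nN nodd hx.
have n2 : (2 <= n)%N by apply: leq_trans nN; rewrite leq_maxr.
have n0 : (0 < n)%N by apply: leq_trans n2.
have hcn := hN0 n (leq_trans (leq_maxl _ _) nN).
move: (hc n) => /andP [c0 ca].
set cc := c n in hcn c0 ca *.
have nR2 : (2 : R) <= n%:R by rewrite ler_nat.
have nR0 : (0 : R) < n%:R by lra.
have hX : K < n%:R * cc ^+ 2.
  have lnn : ln 2 <= ln (n%:R : R) by rewrite ler_ln ?posrE //; lra.
  have lnn0 : 0 <= ln (n%:R : R) by lra.
  have w0 : 0 <= ln (n%:R : R) / n%:R by rewrite divr_ge0 // ltW.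
  have s0 : 0 <= M * Num.sqrt (ln (n%:R : R) / n%:R) by rewrite mulr_ge0 ?sqrtr_ge0 // ltW.
  have hsq : (M * Num.sqrt (ln (n%:R : R) / n%:R)) ^+ 2 < cc ^+ 2.
    by rewrite ltr_pXn2r // ?nnegrE ?ltW.
  rewrite exprMn sqr_sqrtr // in hsq.
  have : M ^+ 2 * ln (n%:R : R) < n%:R * cc ^+ 2.
    move: hsq; rewrite mulrA ltr_pdivrMr // => h; lra.
  have : M * ln (2 : R) <= M ^+ 2 * ln (n%:R : R).
    by rewrite expr2 -mulrA ler_pM2l // ; nra.
  lra.
have ncc : 8 * a < n%:R * cc.
  have h1 : n%:R * cc ^+ 2 <= n%:R * cc * a.
    by rewrite expr2 mulrA ler_pM2l ?ltW // mulr_gt0.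
  have h2 : 8 * a * a < n%:R * cc * a by rewrite /K in hX; nra.
  by rewrite -(ltr_pM2r a0).
set m := ones x.
have mn : (m <= n)%N := ones_le x.
have mR : m%:R / n%:R = 1 / 2 + a by rewrite hx mulfK ?gt_eqF.
have d0 : 0 < 2 * a - cc by lra.
set L := n%:R * (a - cc) / (2 * a - cc).
set U := n%:R * a / (2 * a - cc).
have L0 : 0 <= L by rewrite /L; apply: divr_ge0; [apply: mulr_ge0; lra | lra].
have U0 : 0 <= U by rewrite /U; apply: divr_ge0; [apply: mulr_ge0; lra | lra].
have eL : n%:R - 2 * L = n%:R * cc / (2 * a - cc) by rewrite /L; field; rewrite gt_eqF.
have eU : 2 * U - n%:R = n%:R * cc / (2 * a - cc) by rewrite /U; field; rewrite gt_eqF.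
set v := n%:R * cc / (2 * a - cc).
have ev : n%:R * cc = v * (2 * a - cc) by rewrite /v divfK ?gt_eqF.
have v0 : 0 <= v by rewrite /v; apply: divr_ge0; [apply: mulr_ge0; lra | lra].
have eL' : n%:R - 2 * L = v by rewrite eL.
have eU' : 2 * U - n%:R = v by rewrite eU.
clear eL eU.
have D : n%:R * cc / 2 <= a * v by rewrite ev; nra.
have D4 : 4 < v by nra.
have Un : U <= n%:R.
  rewrite /U ler_pdivrMr //; nra.
pose k1 := (Num.truncn L).+1.
pose k2 := Num.truncn U.
have [hk1a hk1b] : L < k1%:R /\ k1%:R <= L + 1.
  move: (truncn_itv L0) => /andP [h1 h2]; split => //.
  by rewrite /k1 -addn1 natrD lerD2r.
have [hk2a hk2b] : k2%:R <= U /\ U < k2%:R + 1.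
  move: (truncn_itv U0) => /andP [h1 h2]; split => //.
  by rewrite -natr1 in h2.
have k12 : (k1 <= k2)%N.
  rewrite -(ler_nat R); lra.
have k2n : (k2 <= n)%N by rewrite -(ler_nat R); lra.
have k1n : (k1 <= n)%N by apply: leq_trans k2n.
have k1pos : (1 <= k1)%N by [].
clearbody k1 k2.
have hms : (\sum_j x j)%N = m by rewrite /m ones_sum.
have hmc : (\sum_j ~~ x j)%N = (n - m)%N by rewrite sum_compl hms.
have hmR : (m%:R : R) = (1 / 2 + a) * n%:R := hx.
have mR' : ((n - m)%N%:R : R) / n%:R = 1 / 2 - a.
  by rewrite natrB // mulrBl mR divff ?gt_eqF //; lra.
set t := n%:R * cc / 8.
have t0 : 0 < t by rewrite /t; apply: divr_gt0 => //; apply: mulr_gt0.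
have ncct : n%:R * cc = 8 * t by rewrite /t; field.
pose th1 := (k1%:R + m%:R - n%:R / 2) / 2 : R.
pose th2 := (n%:R / 2 + k2%:R - m%:R) / 2 : R.
have mnR : (m%:R : R) <= n%:R by rewrite ler_nat.
have k1R : (k1%:R : R) <= n%:R by rewrite ler_nat.
have k2R : (k2%:R : R) <= n%:R by rewrite ler_nat.
have m0 : (0 : R) <= m%:R by rewrite ler0n.
have hak1 : a * k1%:R <= a * (L + 1) by apply: ler_wpM2l; [apply: ltW|].
have hak2 : a * U <= a * (k2%:R + 1) by apply: ler_wpM2l; apply: ltW.
have eav1 : a * v = a * n%:R - 2 * (a * L) by rewrite -eL'; ring.
have eav2 : a * v = 2 * (a * U) - a * n%:R by rewrite -eU'; ring.
have hyp1 : (\sum_j x j)%N%:R / n%:R * k1%:R + t <= th1.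
  rewrite hms mR /th1 hmR; lra.
have hth1 : th1 <= n%:R by rewrite /th1; lra.
have hyp2 : (\sum_j ~~ x j)%N%:R / n%:R * k2%:R + t <= th2.
  rewrite hmc mR' /th2 hmR; lra.
have hth2 : th2 <= n%:R by rewrite /th2; lra.
have T1 := tail n0 k1n t0 hyp1 hth1.
have T2 := tail n0 k2n t0 hyp2 hth2.
have et : t ^+ 2 / (4 * n%:R) = n%:R * cc ^+ 2 / 256.
  by rewrite /t; field; rewrite gt_eqF.
rewrite et in T1 T2.
set A1 := [set s : {perm 'I_n} | th1 <= (Fk x s k1)%:R] in T1.
set A2 := [set s : {perm 'I_n} | th2 <= (Fk (fun i => ~~ x i) s k2)%:R] in T2.
have hn2 : ((n./2)%:R : R) = n%:R / 2.
  have e : (n = n./2 * 2)%N.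
    by have := odd_double_half n; rewrite (negbTE nodd) add0n -muln2 => ->.
  by rewrite [in RHS]e natrM; field.
rewrite /prob_perm cardsT.
set BB := [set s : {perm 'I_n} | _].
have Hev : forall s, s \notin A1 -> s \notin A2 -> s \in BB.
  move=> s; rewrite !inE -!ltNge => h1 h2.
  pose f := fun k => ones (hyp_sample x s k).
  have O1 := ones_hyp x s k1n.
  have O2 := ones_hyp x s k2n.
  have C2 := Fk_compl x s k2n.
  have f1 : (n./2 <= f k1)%N.
    rewrite -(ler_nat R) hn2.
    have e : ((f k1)%:R + 2 * (Fk x s k1)%:R = k1%:R + m%:R :> R).
      by rewrite /f -natrM -!natrD O1.
    rewrite /th1 in h1; move: e h1; rewrite -hn2.
    move: ((f k1)%:R) ((Fk x s k1)%:R) (k1%:R) (m%:R) ((n./2)%:R : R).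
    by move=> p1 p2 p3 p4 p5; lra.
  have f2 : (f k2 <= n./2)%N.
    rewrite -(ler_nat R) hn2.
    have e : ((f k2)%:R + 2 * (Fk x s k2)%:R = k2%:R + m%:R :> R).
      by rewrite /f -natrM -!natrD O2.
    have e' : ((Fk x s k2)%:R + (Fk (fun i => ~~ x i) s k2)%:R = k2%:R :> R).
      by rewrite -!natrD C2.
    rewrite /th2 in h2; move: e e' h2; rewrite -hn2.
    move: ((f k2)%:R) ((Fk x s k2)%:R) (k2%:R) (m%:R) ((n./2)%:R : R) ((Fk (fun i => ~~ x i) s k2)%:R).
    by move=> p1 p2 p3 p4 p5 p6; lra.
  have step : forall i, (k1 <= i < k1 + (k2 - k1))%N -> (f i <= f i.+1 + 1)%N.
    move=> i /andP [_ hi]; rewrite subnKC // in hi.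
    have iN : (i < n)%N by apply: leq_trans hi k2n.
    have := ones_hyp x s (ltnW iN); have := ones_hyp x s iN.
    rewrite (Fk_S x s (Ordinal iN)) /= /f.
    move: (leq_b1 (x (s (Ordinal iN)))).
    move: (ones (hyp_sample x s i)) (ones (hyp_sample x s i.+1)) (Fk x s i) (nat_of_bool (x (s (Ordinal iN)))) (ones x) => q1 q2 q3 q4 q5.
    clear; lia.
  have f2' : (f (k1 + (k2 - k1)) <= n./2)%N by rewrite subnKC.
  have [i [ai id fi]] := ivt step f1 f2'.
  rewrite subnKC // in id.
  have iN : (i < n.+1)%N by rewrite ltnS (leq_trans id k2n).
  apply/existsP; exists (Ordinal iN) => /=.
  apply/and4P; split.
  - by apply: leq_trans k1pos ai.
  - by apply: le_trans (ltW hk1a) _; rewrite ler_nat.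
  - by apply: le_trans _ hk2a; rewrite ler_nat.
  - by apply/eqP; exact: fi.
have cnt := count_final Hev.
have NN0 : (0 : R) < #|{perm 'I_n}|%:R by rewrite ltr0n card_Sn fact_gt0.
have hB : (#|{perm 'I_n}|%:R : R) - (#|A1|%:R + #|A2|%:R) <= #|BB|%:R.
  move: cnt; rewrite -(ler_nat R) !natrD.
  move: (#|BB|%:R : R) (#|A1|%:R : R) (#|A2|%:R : R) (#|{perm 'I_n}|%:R : R).
  by move=> p1 p2 p3 p4; lra.
have X512 : 512 <= n%:R * cc ^+ 2 by rewrite /K in hX; nra.
set X := n%:R * cc ^+ 2 in X512 T1 T2 *.
set e1 := expR (- (X / 512)).
have e2 : expR (- (X / 256)) = e1 * e1 by rewrite /e1 -expRD; congr expR; field.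
rewrite e2 in T1 T2.
have e10 : 0 < e1 by apply: expR_gt0.
have e1le : 2 * (e1 * e1) <= e1.
  have E2 : 2 <= expR (X / 512) by apply: le_trans (expR_ge1Dx _); lra.
  have E1 : e1 * expR (X / 512) = 1 by rewrite /e1 expRN mulVf ?gt_eqF ?expR_gt0.
  nra.
have eC : 1 / 512 * n%:R * cc ^+ 2 = X / 512 by rewrite /X; field.
rewrite eC -/e1 ler_pdivlMr //.
have : #|{perm 'I_n}|%:R * (2 * (e1 * e1)) <= #|{perm 'I_n}|%:R * e1 by apply: ler_wpM2l => //; apply: ltW.
move: T1 T2 hB NN0; move: (#|BB|%:R : R) (#|A1|%:R : R) (#|A2|%:R : R) (#|{perm 'I_n}|%:R : R).
by move=> p1 p2 p3 p4; nra.
Qed.
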